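(* Let $P$ be a locally finite poset, $R$ a commutative unital ring, and $n\ge 3$. Then $I^n(P,R)$ is not third power associative (i.e. there exists $f\in I^n(P,R)$ with $f(ff)\ne (ff)f$), unless $P$ is an antichain.
   Context: For a poset $P$ and $n\ge 2$, $P^n_\le=\{(x_1,\dots,x_n)\in P^n: x_1\le\dots\le x_n\}$. For $\mathbf{x}=(x_1,\dots,x_n)\in P^n_\le$, $\mathcal{I}(\mathbf{x})=[x_1,x_2]\times\dots\times[x_{n-1},x_n]\subseteq P^{n-1}_\le$, where $[a,b]=\{c\in P: a\le c\le b\}$. The $n$-th partial flag incidence algebra $I^n(P,R)$ is the $R$-module of functions $f:P^n_\le\to R$ with multiplication $(fg)(\mathbf{x})=\sum_{\mathbf{y}\in\mathcal{I}(\mathbf{x})}f(x_1,\mathbf{y})g(\mathbf{y},x_n)$. *)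

(* Defs.v *)
From HB Require Import structures.
From mathcomp Require Import all_boot all_order all_algebra.
From Stdlib Require Import ClassicalEpsilon.
Set Implicit Arguments. Unset Strict Implicit. Unset Printing Implicit Defensive.
Import Order.TTheory GRing.Theory.
Local Open Scope order_scope.

Definition locally_finite (d : Order.disp_t) (P : porderType d) : Prop :=
  forall a b : P, exists s : seq P, forall c : P, (c \in s) = (a <= c <= b).

Definition antichain (d : Order.disp_t) (P : porderType d) : Prop :=
  forall a b : P, a <= b -> a = b.

Section PFIA.
Variables (d : Order.disp_t) (P : porderType d) (lf : locally_finite P).

Definition itv (a b : P) : seq P :=
  undup (proj1_sig (constructive_indefinite_description _ (lf a b))).

(* chains x0 [:: x1; ...; xk] enumerates [x0,x1] x [x1,x2] x ... x [x_{k-1},x_k]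
   as lists of length k. *)
Fixpoint chains (x0 : P) (xs : seq P) : seq (seq P) :=
  match xs with
  | [::] => [:: [::]]
  | x1 :: xs' => [seq y :: ys | y <- itv x0 x1, ys <- chains x1 xs']
  end.

Definition Iset (x : seq P) : seq (seq P) :=
  if x is x1 :: xs then chains x1 xs else [::].

Variable R : comNzRingType.

(* Elements of I^n(P,R) are represented by functions seq P -> R; only their
   values on chains x_1 <= ... <= x_n of length n are relevant.
   (f g)(x) = sum_{y in I(x)} f(x_1, y) g(y, x_n). *)
Definition pfmul (f g : seq P -> R) (x : seq P) : R :=
  if x is x1 :: xs then
    (\sum_(y <- chains x1 xs) f (x1 :: y) * g (rcons y (last x1 xs)))%R
  else 0%R.

End PFIA.

(* Main.v *)
Require Import Defs.
From HB Require Import structures.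
From mathcomp Require Import all_boot all_order all_algebra.
From Stdlib Require Import Classical ClassicalEpsilon.
Import Order.TTheory GRing.Theory.
Local Open Scope order_scope.

Set Implicit Arguments.
Section Aux.
Variables (d : Order.disp_t) (P : porderType d) (lf : locally_finite P).

Lemma mem_itv (a b c : P) : (c \in itv lf a b) = (a <= c <= b).
Proof.
rewrite /itv mem_undup; case: constructive_indefinite_description => s /= hs.
exact: hs.
Qed.

Lemma uniq_itv (a b : P) : uniq (itv lf a b).
Proof. exact: undup_uniq. Qed.

Lemma itv_refl (c : P) : itv lf c c = [:: c].
Proof.
have U := uniq_itv c c.
have M : forall x, (x \in itv lf c c) = (x == c).
  move=> x; rewrite mem_itv; apply/idP/eqP; last by move=> ->; rewrite lexx.
  by move=> h; apply/le_anti; rewrite andbC.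
have : c \in itv lf c c by rewrite M.
case: (itv lf c c) U M => [//|x s] /= /andP[xs us] M _.
have xc : x = c by apply/eqP; rewrite -M inE eqxx.
subst x; case: s xs us M => [//|y s] /= ys _ M.
have : y = c by apply/eqP; rewrite -M !inE eqxx orbT.
by move=> yc; subst y; rewrite inE eqxx in ys.
Qed.

Lemma chains_nseq (b : P) k : chains lf b (nseq k b) = [:: nseq k b].
Proof.
elim: k => [//|k IH] /=; rewrite itv_refl IH /=.
by [].
Qed.

Lemma chains_sum (R : comNzRingType) (x0 x1 : P) xs (F : seq P -> R) :
  (\sum_(y <- chains lf x0 (x1 :: xs)) F y =
   \sum_(c <- itv lf x0 x1) \sum_(ys <- chains lf x1 xs) F (c :: ys))%R.
Proof. by rewrite /= big_allpairs_dep. Qed.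

Lemma two_point (R : comNzRingType) (s : seq P) (a b : P) (F : P -> R) :
  uniq s -> a \in s -> b \in s -> a != b ->
  (forall c, c != a -> c != b -> F c = 0%R) ->
  (\sum_(c <- s) F c = F a + F b)%R.
Proof.
move=> us as_ bs ab H.
have hba' : b != a by rewrite eq_sym.
rewrite (bigD1_seq a) //= -big_filter (bigD1_seq b) ?filter_uniq //=;
  last by rewrite mem_filter /= hba'.
rewrite big_seq_cond big1 ?addr0 // => c /andP[]; rewrite mem_filter => /andP[ca _] cb.
exact: H.
Qed.

Lemma rcons_nseq (b : P) k : rcons (nseq k b) b = b :: nseq k b.
Proof. by elim: k => //= k ->. Qed.

Lemma last_nseq' (b : P) k : last b (nseq k b) = b.
Proof. by elim: k. Qed.

Lemma path_nseq (b : P) k : path <=%O b (nseq k b).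
Proof. by elim: k => //= k ->; rewrite lexx. Qed.

End Aux.


Theorem corollary1p3 (d : Order.disp_t) (P : porderType d)
  (lf : locally_finite P) (R : comNzRingType) (n : nat) :
  (3 <= n)%N ->
  ~ antichain P ->
  exists (f : seq P -> R) (x : seq P),
    [/\ size x = n, sorted <=%O x &
        pfmul lf f (pfmul lf f f) x != pfmul lf (pfmul lf f f) f x].
Proof.
case: n => [|[|[|k]]] // _ nac.
have [a [b [leab hab]]] : exists a b : P, a <= b /\ a != b.
  apply: NNPP => H; apply: nac => a b lab; apply: NNPP => nab.
  by apply: H; exists a, b; split => //; apply/eqP.
have hba : b != a by rewrite eq_sym.
set T := nseq k b.
set e0 := [:: b, b, b & T].
set e1 := [:: a, b, b & T].
set e2 := [:: a, a, b & T].
set e3 := [:: a, a, a & T].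
pose f (t : seq P) : R := if t \in [:: e1; e2; e3] then 1%R else 0%R.
have aab : a \in itv lf a b by rewrite mem_itv lexx leab.
have bab : b \in itv lf a b by rewrite mem_itv lexx leab.
have U := uniq_itv lf a b.
have F1 : forall F G : seq P -> R, pfmul lf F G e1 =
   (\sum_(c <- itv lf a b) F [:: a, c, b & T] * G [:: c, b, b & T])%R.
  move=> F G; rewrite /pfmul /e1 chains_sum.
  idtac. apply: eq_bigr => c _.
  rewrite /= itv_refl /= cats0 big_map /T chains_nseq big_seq1 /=.
  by rewrite last_nseq' rcons_nseq.
have F3 : forall F G : seq P -> R, pfmul lf F G e2 =
   (\sum_(c <- itv lf a b) F [:: a, a, c & T] * G [:: a, c, b & T])%R.
  move=> F G; rewrite /pfmul /e2 chains_sum itv_refl big_seq1 chains_sum.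
  apply: eq_bigr => c _.
  by rewrite /T chains_nseq big_seq1 /= last_nseq' rcons_nseq.
have F0 : forall F G : seq P -> R, pfmul lf F G e0 = (F e0 * G e0)%R.
  move=> F G; rewrite /pfmul /e0 /T.
  rewrite (chains_nseq lf b k.+2) big_seq1 /=.
  by rewrite last_nseq' rcons_nseq.
have hab' := negbTE hab; have hba' := negbTE hba.
have fe0 : f e0 = 0%R by rewrite /f /e0 /e1 /e2 /e3 !inE !eqseq_cons !eqxx ?hab' ?hba'.
have fe1 : f e1 = 1%R by rewrite /f !inE eqxx.
have fe2 : f e2 = 1%R by rewrite /f !inE eqxx orbT.
have fe3 : f e3 = 1%R by rewrite /f !inE eqxx !orbT.
have fz1 : forall c, c != a -> c != b -> f [:: a, c, b & T] = 0%R.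
  move=> c /negbTE ca /negbTE cb.
  by rewrite /f /e0 /e1 /e2 /e3 !inE !eqseq_cons !eqxx ?hab' ?hba' ?ca ?cb.
have fz2 : forall c, c != a -> c != b -> f [:: c, b, b & T] = 0%R.
  move=> c /negbTE ca /negbTE cb.
  by rewrite /f /e0 /e1 /e2 /e3 !inE !eqseq_cons !eqxx ?hab' ?hba' ?ca ?cb.
have fz3 : forall c, c != a -> c != b -> f [:: a, a, c & T] = 0%R.
  move=> c /negbTE ca /negbTE cb.
  by rewrite /f /e0 /e1 /e2 /e3 !inE !eqseq_cons !eqxx ?hab' ?hba' ?ca ?cb.
have ff1 : pfmul lf f f e1 = 1%R.
  rewrite F1 (two_point _ _ _ _ _ _ U aab bab hab); last by move=> c ca cb; rewrite fz1 ?mul0r.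
  rewrite -/e1 -/e2 -/e0 fe0 fe1 fe2.
  by rewrite mulr0 addr0 mulr1.
have ff2 : pfmul lf f f e2 = (1 + 1)%R.
  rewrite F3 (two_point _ _ _ _ _ _ U aab bab hab); last by move=> c ca cb; rewrite fz3 ?mul0r.
  by rewrite -/e1 -/e2 -/e3 fe1 fe2 fe3 !mulr1.
have ff0 : pfmul lf f f e0 = 0%R by rewrite F0 fe0 mulr0.
exists f, e1; split.
- by rewrite /e1 /= size_nseq.
- by rewrite /e1 /= leab /= lexx path_nseq.
rewrite F1 (two_point _ _ _ _ _ _ U aab bab hab); last by move=> c ca cb; rewrite fz1 ?mul0r.
rewrite F1 (two_point _ _ _ _ _ _ U aab bab hab); last by move=> c ca cb; rewrite fz2 ?mulr0.
rewrite -/e1 -/e2 -/e0 ff1 ff2 ff0 fe0 fe1 fe2 !mulr0 !mul1r !addr0 mulr1.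
apply/eqP => /(congr1 (fun x => x - 1)%R); rewrite subrr addrK => /eqP.
by rewrite eq_sym oner_eq0.
Qed.
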